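(* Let $q$ be a prime, let $m \geq 1$ be an integer, and let $u$ be an integer with $0 \leq u \leq q-2$. Let $\mathcal{RM}_q(u,m) \subseteq \mathbb{F}_q^{q^m}$ be the code consisting of the vectors $\left(f(\alpha)\right)_{\alpha \in \mathbb{F}_q^m}$ (coordinates indexed by the $q^m$ points of $\mathbb{F}_q^m$ in a fixed order), where $f$ ranges over all polynomials in $\mathbb{F}_q[x_1,\ldots,x_m]$ of total degree at most $u$, and let $\mathcal{RM}^{\perp}_q(u,m)$ be its dual code with respect to the standard bilinear form $\langle \mathbf{x},\mathbf{y}\rangle=\sum_i x_i y_i$. Then for every codeword $\mathbf{c}$ of $\mathcal{RM}^{\perp}_q(u,m)$ of minimum nonzero Hamming weight, the $u+2$ points of $\mathbb{F}_q^m$ indexing the support of $\mathbf{c}$ lie on an affine line: that is, they can be written as $\mathbf{p}_1, \mathbf{p}_1 + t_1\mathbf{h}, \ldots, \mathbf{p}_1 + t_{u+1}\mathbf{h}$ for some $\mathbf{p}_1 \in \mathbb{F}_q^m$, some direction $\mathbf{h} \in \mathbb{F}_q^m \setminus \{\mathbf{0}\}$, and distinct nonzero elements $t_1,\ldots,t_{u+1} \in \mathbb{F}_q$.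
   Context: The support of a vector is the set of coordinates where it is nonzero; since coordinates are indexed by points of $\mathbb{F}_q^m$, the support is identified with a set of points of $\mathbb{F}_q^m$. For $u \leq q-2$ the minimum Hamming distance (minimum nonzero weight) of $\mathcal{RM}^{\perp}_q(u,m)$ equals $u+2$ (a known consequence of the Delsarte–Goethals–MacWilliams formula for the minimum distance of generalized Reed–Muller codes, using that $\mathcal{RM}^{\perp}_q(u,m)=\mathcal{RM}_q(m(q-1)-u-1,m)$). *)

(* Defs.v *)
From HB Require Import structures.
From mathcomp Require Import all_boot all_order all_algebra.
From mathcomp Require Import mpoly.
Set Implicit Arguments. Unset Strict Implicit. Unset Printing Implicit Defensive.
Import GRing.Theory.
Local Open Scope ring_scope.

Definition point (q m : nat) := 'rV['F_q]_m.
Definition word (q m : nat) := {ffun 'rV['F_q]_m -> 'F_q}.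

Definition RM (q u m : nat)  (c : word q m) : Prop :=
  exists f : {mpoly 'F_q[m]},
      (msize f <= u.+1)%N /\ forall a : 'rV['F_q]_m, c a = f.@[fun i => a ord0 i].

Definition RMdual (q u m : nat)  (c : word q m) : Prop :=
  forall d : word q m, @RM q u m d ->
      \sum_(a : 'rV['F_q]_m) c a * d a = 0.

Definition supp (q m : nat) (c : word q m) : {set 'rV['F_q]_m} :=
  [set a | c a != 0].

Definition hweight (q m : nat) (c : word q m) : nat := #|supp c|.

(* Main.v *)
Require Import Defs.
From HB Require Import structures.
From mathcomp Require Import all_boot all_order all_algebra.
From mathcomp Require Import mpoly.
From mathcomp Require Import zify ring.
Import GRing.Theory.
Local Open Scope ring_scope.

Section PS.
Variable q : nat.
Hypothesis hq : prime q.

Lemma powsum0 (k : nat) : (k < q.-1)%N -> \sum_(s : 'F_q) s ^+ k = 0.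
Proof.
move=> hk.
case: k hk => [|k] hk.
  under eq_bigr do rewrite expr0.
  by rewrite sumr_const card_Fp // pchar_Fp_0.
have [a a0 ak] : exists2 a : 'F_q, a != 0 & a ^+ k.+1 != 1.
  case: (boolP [exists a : 'F_q, (a != 0) && (a ^+ k.+1 != 1)]).
    by case/existsP => a /andP[]; exists a.
  rewrite negb_exists => /forallP H; exfalso.
  have : (size (enum (predC1 (0%R : 'F_q))) < size (('X^(k.+1) - 1)%R : {poly 'F_q}))%N.
    apply: max_poly_roots.
    - by rewrite -size_poly_eq0 size_XnsubC.
    - apply/allP => a; rewrite mem_enum /= => a0.
      move: (H a); have a0' : a != 0 := a0; rewrite a0' /= negbK => /eqP ak.
      by rewrite /root hornerD hornerN hornerXn hornerC ak subrr.
    - exact: enum_uniq.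
  rewrite size_XnsubC // -cardE cardC1 card_Fp //.
  by move: hk; case: q => // q'; rewrite /= ltnNge => /negP.
have e : \sum_(s : 'F_q) s ^+ k.+1 = a ^+ k.+1 * \sum_(s : 'F_q) s ^+ k.+1.
  rewrite mulr_sumr (reindex_inj (mulfI a0)) /=.
  by apply: eq_bigr => s _; rewrite exprMn.
apply/eqP; move/eqP: e; rewrite -subr_eq0 -{1}[\sum_s _]mul1r -mulrBl mulf_eq0.
by rewrite subr_eq0 eq_sym (negbTE ak).
Qed.
End PS.

Section B.
Variable q : nat.
Hypothesis hq : prime q.

Lemma polysum0 (h : {poly 'F_q}) : (size h <= q.-1)%N -> \sum_(s : 'F_q) h.[s] = 0.
Proof.
move=> hs.
under eq_bigr do rewrite horner_coef.
rewrite exchange_big /= big1 // => i _.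
rewrite -mulr_sumr powsum0 ?mulr0 //.
exact: leq_trans (ltn_ord i) hs.
Qed.

Lemma meval_const m (f : {mpoly 'F_q[m]}) (s : 'F_q) :
  f.@[fun _ => s] = \sum_(mm <- msupp f) f@_mm * s ^+ mdeg mm.
Proof.
rewrite mevalE; apply: eq_bigr => mm _.
by rewrite prodrXr mdegE.
Qed.
End B.

Section C.
Variables q m u : nat.
Hypothesis hq : prime q.
Hypothesis hm : (1 <= m)%N.
Hypothesis hu : (u <= q - 2)%N.

Lemma exists_small : exists c' : word q m,
  [/\ @RMdual q u m c', c' != 0 & (hweight c' <= u.+2)%N].
Proof.
set k := (q - 2 - u)%N.
set rs := take k (enum 'F_q).
set P : {poly 'F_q} := \prod_(z <- rs) ('X - z%:P).
set e : 'rV['F_q]_m := const_mx 1.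
set i0 : 'I_m := Ordinal hm.
have q2 : (2 <= q)%N by apply: prime_gt1.
have sizers : size rs = k.
  by rewrite size_takel // -cardE card_Fp // /k; lia.
have rsu : uniq rs by rewrite take_uniq ?enum_uniq.
have Pe s : P.[s] = \prod_(z <- rs) (s - z).
  by rewrite horner_prod; apply: eq_bigr => z _; rewrite hornerXsubC.
have Pnz s : (P.[s] != 0) = (s \notin rs).
  rewrite Pe; apply/idP/idP.
    apply: contra => sin; rewrite (big_rem s sin) /= subrr mul0r //.
  move=> sn; rewrite prodf_seq_neq0; apply/allP => z zin /=.
  by rewrite subr_eq0; apply: contraNneq sn => ->.
have seinj s s' : (s *: e == s' *: e) = (s == s').
  apply/eqP/eqP => [H|->] //.
  by move/(congr1 (fun v : 'rV['F_q]_m => v ord0 i0)): H; rewrite !mxE mulr1 mulr1.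
set c' : word q m := [ffun x => \sum_(s : 'F_q) (if x == s *: e then P.[s] else 0)].
have c'e s : c' (s *: e) = P.[s].
  rewrite ffunE (bigD1 s) //= eqxx big1 ?addr0 // => s' ns'.
  by rewrite seinj eq_sym (negbTE ns').
exists c'; split.
- move=> d [f [fs fd]].
  have -> : \sum_a c' a * d a = \sum_(s : 'F_q) P.[s] * f.@[fun _ => s].
    under eq_bigr do rewrite ffunE mulr_suml.
    rewrite exchange_big /=; apply: eq_bigr => s _.
    rewrite (bigD1 (s *: e)) //= eqxx big1 ?addr0.
      by rewrite fd; congr (_ * _); apply: meval_eq => i; rewrite !mxE mulr1.
    by move=> x /negbTE ->; rewrite mul0r.
  under eq_bigr do rewrite meval_const // mulr_sumr.
  rewrite exchange_big /= big_seq big1 // => mm mmin.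
  have hd : (mdeg mm <= u)%N by have := msize_mdeg_lt mmin; lia.
  under eq_bigr do rewrite mulrCA.
  rewrite -mulr_sumr.
  under eq_bigr do rewrite -hornerXn -hornerM.
  rewrite polysum0 ?mulr0 //.
  apply: leq_trans (size_polyMleq _ _) _.
  rewrite size_polyXn size_prod_XsubC sizers /k; lia.
- apply/eqP => /ffunP c0.
  have [s sn] : exists s, s \notin rs.
    case: (boolP [exists s, s \notin rs]) => [/existsP//|].
    rewrite negb_exists => /forallP H.
    have : (#|'F_q| <= #|rs|)%N.
      by apply: subset_leq_card; apply/subsetP => x _; move: (H x); rewrite negbK.
    rewrite card_Fp // (card_uniqP rsu) sizers /k; lia.
  have := c0 (s *: e); rewrite c'e ffunE => H; by move: (Pnz s); rewrite H eqxx sn.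
- rewrite /hweight.
  have sub : supp c' \subset [set s *: e | s in [predC rs]].
    apply/subsetP => x; rewrite inE ffunE => H.
    have [s _ ] : exists2 s, true & (if x == s *: e then P.[s] else 0) != 0.
      case: (boolP [exists s, (if x == s *: e then P.[s] else 0) != 0]).
        by case/existsP => s hs; exists s.
      rewrite negb_exists => /forallP H2; exfalso; move/negP: H; apply.
      by apply/eqP; apply: big1 => s _; move: (H2 s); rewrite negbK => /eqP.
    case: ifP; last by rewrite eqxx.
    move=> /eqP -> Ps; apply/imsetP; exists s => //.
    by rewrite inE /= -Pnz.
  apply: leq_trans (subset_leq_card sub) _.
  apply: leq_trans (leq_imset_card _ _) _.
  rewrite -(leq_add2l #|rs|) cardC card_Fp // (card_uniqP rsu) sizers /k.
  lia.
Qed.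
End C.
Set Implicit Arguments.

Section D.
Variables q m u : nat.
Hypothesis hq : prime q.

Definition ev (x : 'rV['F_q]_m) : 'I_m -> 'F_q := fun i => x ord0 i.

Definition aff (i j : 'I_m) (a b c : 'F_q) : {mpoly 'F_q[m]} :=
  a *: 'X_i + b *: 'X_j + c%:MP.

Lemma aff_size i j a b c : (msize (aff i j a b c) <= 2)%N.
Proof.
rewrite /aff; apply: leq_trans (msizeD_le _ _) _.
rewrite geq_max; apply/andP; split; last by rewrite msizeC; case: (c != 0).
apply: leq_trans (msizeD_le _ _) _.
rewrite geq_max; apply/andP; split;
  by apply: leq_trans (msizeZ_le _ _) _; rewrite msizeX mdeg1.
Qed.

Lemma aff_eval i j a b c v : (aff i j a b c).@[v] = a * v i + b * v j + c.
Proof. by rewrite /aff !mevalD !mevalZ !mevalXU mevalC. Qed.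

Lemma prod_size (L : seq {mpoly 'F_q[m]}) :
  all (fun l => msize l <= 2)%N L -> (msize (\prod_(l <- L) l) <= (size L).+1)%N.
Proof.
elim: L => [|l L IH]; first by rewrite big_nil msize1.
rewrite /= big_cons => /andP[hl hL].
have [->|lnz] := eqVneq l 0; first by rewrite mul0r msize0.
have [->|pnz] := eqVneq (\prod_(j <- L) j) 0; first by rewrite mulr0 msize0.
rewrite msizeM //; move: (IH hL) => h.
apply: (@leq_trans (2 + (size L).+1).-1); last by rewrite addnS.
by rewrite -!subn1 leq_sub2r // leq_add.
Qed.

Lemma key (c : word q m) (a0 : 'rV['F_q]_m) (L : seq {mpoly 'F_q[m]}) :
  @RMdual q u m c -> a0 \in supp c -> (size L <= u)%N ->
  all (fun l => msize l <= 2)%N L ->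
  all (fun l => l.@[ev a0] != 0) L ->
  (forall b, b \in supp c -> b != a0 -> has (fun l => l.@[ev b] == 0) L) -> False.
Proof.
move=> hd ha0 hL hs hn hc.
set f := \prod_(l <- L) l.
have := hd [ffun a => f.@[ev a]] _.
have : (forall b, b \in supp c -> b != a0 -> f.@[ev b] = 0).
  move=> b hb nb; rewrite /f rmorph_prod /=.
  case/hasP: (hc b hb nb) => l lin /eqP l0.
  by rewrite (big_rem l lin) /= l0 mul0r.
move=> fz.
have hf : @RM q u m [ffun a => f.@[ev a]].
  exists f; split; last by move=> a; rewrite ffunE.
  have := @prod_size L hs; rewrite -/f; lia.
move=> /(_ hf); rewrite (bigD1 a0) //= big1 ?addr0.
  rewrite ffunE => /eqP; rewrite mulf_eq0; move: ha0; rewrite inE => /negbTE ->.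
  rewrite /= /f rmorph_prod /= => /eqP P0.
  have : \prod_(l <- L) l.@[ev a0] != 0 by rewrite prodf_seq_neq0.
  by rewrite P0 eqxx.
move=> a na; rewrite ffunE.
case: (boolP (a \in supp c)) => ha; first by rewrite fz // mulr0.
by move: ha; rewrite inE negbK => /eqP ->; rewrite mul0r.
Qed.
End D.
Set Implicit Arguments.

Section E.
Variables q m u : nat.
Hypothesis hq : prime q.

Definition lin (a0 b : 'rV['F_q]_m) : {mpoly 'F_q[m]} :=
  match [pick i | b ord0 i != a0 ord0 i] with
  | Some i => aff q i i 1 0 (- b ord0 i)
  | None => 1 end.

Lemma lin_size a0 b : (msize (lin a0 b) <= 2)%N.
Proof. by rewrite /lin; case: pickP => [i _|_]; [apply: aff_size|rewrite msize1]. Qed.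

Lemma lin_eval a0 b : b != a0 -> (lin a0 b).@[ev q a0] != 0 /\ (lin a0 b).@[ev q b] = 0.
Proof.
move=> nb; rewrite /lin; case: pickP => [i hi|H].
  rewrite !aff_eval /ev !mul0r !mul1r !addr0 subrr; split => //.
  by rewrite subr_eq0 eq_sym.
by case/eqP: nb; apply/rowP => i; rewrite [ord0 as X in _ X _]ord1; have := H i => /= /negbFE/eqP.
Qed.

Lemma exists_nz (c : word q m) : c != 0 -> exists a, a \in supp c.
Proof.
move=> cnz; case: (boolP [exists a, c a != 0]) => [/existsP[a ha]|].
  by exists a; rewrite inE.
rewrite negb_exists => /forallP H; case/eqP: cnz; apply/ffunP => a.
by rewrite ffunE; apply/eqP; move: (H a); rewrite negbK.
Qed.


Lemma weight_lb (c : word q m) : @RMdual q u m c -> c != 0 -> (u.+2 <= #|supp c|)%N.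
Proof.
move=> hd cnz; have [a0 ha0] := @exists_nz c cnz.
rewrite leqNgt; apply/negP => hlt.
apply: (@key q m u hq c a0 [seq lin a0 b | b <- enum (supp c :\ a0)] hd ha0).
- rewrite size_map -cardE; move: hlt; rewrite (cardsD1 a0) ha0 /= add1n ltnS; exact.
- by apply/allP => l /mapP[b _ ->]; apply: lin_size.
- apply/allP => l /mapP[b]; rewrite mem_enum !inE => /andP[nb _] ->.
  by case: (lin_eval _ _ nb).
- move=> b hb nb; apply/hasP; exists (lin a0 b); last by case: (lin_eval _ _ nb) => _ ->.
  by apply/mapP; exists b; rewrite // mem_enum in_setD1 nb hb.
Qed.

Lemma multiple (v h : 'rV['F_q]_m) (k : 'I_m) : h ord0 k != 0 ->
  (forall i j, v ord0 i * h ord0 j = v ord0 j * h ord0 i) ->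
  v = (v ord0 k / h ord0 k) *: h.
Proof.
move=> hk H; apply/rowP => i; rewrite mxE.
by rewrite mulrAC -(H i k) mulfK.
Qed.

Lemma collinear (c : word q m) (a0 b a : 'rV['F_q]_m) :
  @RMdual q u m c -> (#|supp c| <= u.+2)%N ->
  a0 \in supp c -> b \in supp c -> a \in supp c ->
  forall i j, (a - a0) ord0 i * (b - a0) ord0 j = (a - a0) ord0 j * (b - a0) ord0 i.
Proof.
move=> hd hw ha0 hb ha i j; apply/eqP; rewrite -[_ == _]negbK; apply/negP => hne.
set h := b - a0.
set lam := aff q i j (h ord0 j) (- h ord0 i) (- (h ord0 j * a0 ord0 i) + h ord0 i * a0 ord0 j).
have lamE x : lam.@[ev q x] = h ord0 j * (x - a0) ord0 i - h ord0 i * (x - a0) ord0 j.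
  rewrite aff_eval /ev !mxE; ring.
have na : a != a0.
  apply: contraNneq hne => ->; by rewrite subrr !mxE !mul0r.
have nab : a != b.
  apply: contraNneq hne => ->; by rewrite mulrC.
have nb : b != a0.
  apply: contraNneq hne => ->; by rewrite subrr !mxE !mulr0.
apply: (@key q m u hq c a (lam :: [seq lin a x | x <- enum (supp c :\ a :\ a0 :\ b)]) hd ha).
- rewrite /= size_map -cardE; move: hw.
  rewrite (cardsD1 a) ha (cardsD1 a0 (supp c :\ a)) in_setD1 eq_sym na ha0.
  rewrite (cardsD1 b (supp c :\ a :\ a0)) !in_setD1 nb eq_sym nab hb /=.
  by rewrite !add1n !ltnS => H; exact: H.
- rewrite /= aff_size /=; by apply/allP => l /mapP[x _ ->]; apply: lin_size.
- rewrite /= lamE; apply/andP; split.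
    by rewrite subr_eq0 mulrC [h ord0 i * _]mulrC.
  apply/allP => l /mapP[x]; rewrite mem_enum !in_setD1 => /and4P[_ _ nx _] ->.
  by case: (lin_eval _ _ nx).
- move=> x hx nx /=; rewrite lamE.
  case: (eqVneq x a0) => [->|nx0]; first by rewrite subrr !mxE !mulr0 subrr eqxx.
  case: (eqVneq x b) => [->|nxb]; first by rewrite -/h mulrC subrr eqxx.
  apply/orP; right; apply/hasP; exists (lin a x); last by case: (lin_eval _ _ nx) => _ ->.
  by apply/mapP; exists x; rewrite // mem_enum !in_setD1 nxb nx0 nx hx.
Qed.

End E.
Unset Implicit Arguments.

Theorem lemma1 (q m u : nat) (hq : prime q) (hm : (1 <= m)%N) (hu : (u <= q - 2)%N)
  (c : word q m) :
  @RMdual q u m c -> c != 0 ->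
  (forall c' : word q m, @RMdual q u m c' -> c' != 0 -> (hweight c <= hweight c')%N) ->
  exists (p1 h : 'rV['F_q]_m) (t : 'I_u.+1 -> 'F_q),
    [/\ h != 0, injective t, (forall i, t i != 0) &
        supp c = p1 |: [set p1 + t i *: h | i : 'I_u.+1]].
Proof.
move=> hd cnz hmin.
have [c' [hd' c'nz c'w]] := exists_small q m u hq hm hu.
have hw : (#|supp c| <= u.+2)%N := leq_trans (hmin c' hd' c'nz) c'w.
have hlb := weight_lb hq hd cnz.
have [a0 ha0] := exists_nz c cnz.
set S := supp c in hw hlb ha0 *.
set T := S :\ a0.
have hT : #|T| = u.+1.
  by move: hw hlb; rewrite (cardsD1 a0 S) ha0 /= add1n ltnS => h1 h2; apply/eqP; rewrite eqn_leq h1.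
have [b hb] : exists b, b \in T.
  by apply/set0Pn; rewrite -card_gt0 hT.
have hbS : b \in S by move: hb; rewrite in_setD1 => /andP[].
have nb : b != a0 by move: hb; rewrite in_setD1 => /andP[].
set h := b - a0.
have hnz : h != 0 by rewrite subr_eq0.
have [k hk] : exists k, h ord0 k != 0.
  case: (boolP [exists k, h ord0 k != 0]) => [/existsP//|].
  rewrite negb_exists => /forallP H; case/eqP: hnz; apply/rowP => j.
  by rewrite [RHS]mxE; apply/eqP; move: (H j); rewrite negbK.
set tc := fun x : 'rV['F_q]_m => (x - a0) ord0 k / h ord0 k.
have line x : x \in S -> x = a0 + tc x *: h.
  move=> hx; rewrite /tc -(@multiple q m _ _ k hk (collinear hq hd hw ha0 hbS hx)).
  by rewrite addrC subrK.
set g := fun i : 'I_u.+1 => nth a0 (enum T) i.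
have sizeT : size (enum T) = u.+1 by rewrite -cardE hT.
have gT i : g i \in T by rewrite /g -mem_enum mem_nth // sizeT.
have gS i : g i \in S by move: (gT i); rewrite in_setD1 => /andP[].
set t := fun i => tc (g i).
have gE i : a0 + t i *: h = g i by rewrite /t -line.
have ginj : injective g.
  move=> i j /eqP; rewrite /g nth_uniq ?sizeT ?enum_uniq // => /eqP; exact: val_inj.
exists a0, h, t; split => //.
- by move=> i j e; apply: ginj; rewrite -!gE e.
- move=> i; apply/negP => /eqP t0; move: (gT i); rewrite in_setD1 -gE t0 scale0r addr0 eqxx.
  by [].
- have -> : [set a0 + t i *: h | i : 'I_u.+1] = T.
    under eq_imset do rewrite gE.
    apply/eqP; rewrite eqEcard; apply/andP; split.
      by apply/subsetP => x /imsetP[i _ ->].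
    by rewrite card_imset // card_ord hT.
  by rewrite setD1K.
Qed.
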